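(* Let $q>0$ with $q\ne 1$, let $t\ge 0$, and set $$A=\begin{pmatrix} q & \sqrt t\\ 0 & -1\end{pmatrix},\qquad B=\begin{pmatrix} q & 0\\ -\sqrt t & -1\end{pmatrix}.$$ Then $$\|AB-qBA\|_F^2=t^2(1+q^2)+2t(1+q)(1+q^3)+(1-q)^2(1+q^4).$$ Let $f(t)=\|AB-qBA\|_F^2/(\|A\|_F^2\|B\|_F^2)$. On $t\ge 0$, $f$ attains its maximum at $t_{\max}=\frac{3q^4+2q^2+3}{(1-q)^2}$, where $$f(t_{\max})=\frac{1-h(q)x(q)}{1-x(q)}\,(1+q^2),\qquad x(q)=\frac{q(1-q)^2}{2(1+q^4)},\quad h(q)=\frac{(1+q)^2}{2(1+q^2)}.$$ Moreover $f(t_{\max})>1+q^2$. Consequently, for every $q>0$ with $q\neq 1$, there exist $A,B\in M_2(\mathbb{C})$ with $\|AB-qBA\|_F^2>(1+q^2)\|A\|_F^2\|B\|_F^2$.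
   Context: $\|X\|_F=\sqrt{\operatorname{tr}(XX^\dagger)}$ denotes the Frobenius norm. *)

(* Defs.v *)
From HB Require Import structures.
From mathcomp Require Import all_boot all_order all_algebra.
From mathcomp Require Import complex.
Set Implicit Arguments. Unset Strict Implicit. Unset Printing Implicit Defensive.
Import Order.TTheory GRing.Theory Num.Theory.
Local Open Scope ring_scope.
Local Open Scope complex_scope.

Definition adjmx (R : rcfType) m n (X : 'M[R[i]]_(m, n)) : 'M[R[i]]_(n, m) :=
  (map_mx (@conjc R) X)^T.

(* Frobenius norm ||X||_F = sqrt(tr(X X^dagger)); tr(X X^dagger) is real, we take its real part. *)
Definition frob (R : rcfType) m n (X : 'M[R[i]]_(m, n)) : R :=
  Num.sqrt (complex.Re (\tr (X *m adjmx X))).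

Definition matA (R : rcfType) (q t : R) : 'M[R[i]]_2 :=
  \matrix_(i < 2, j < 2)
    (if (val i == 0%N) && (val j == 0%N) then q%:C
     else if (val i == 0%N) && (val j == 1%N) then (Num.sqrt t)%:C
     else if (val i == 1%N) && (val j == 1%N) then (-1)%:C
     else 0).

Definition matB (R : rcfType) (q t : R) : 'M[R[i]]_2 :=
  \matrix_(i < 2, j < 2)
    (if (val i == 0%N) && (val j == 0%N) then q%:C
     else if (val i == 1%N) && (val j == 0%N) then (- Num.sqrt t)%:C
     else if (val i == 1%N) && (val j == 1%N) then (-1)%:C
     else 0).

Definition qcomm (R : rcfType) n (q : R) (A B : 'M[R[i]]_n) : 'M[R[i]]_n :=
  A *m B - q%:C *: (B *m A).

Definition fratio (R : rcfType) (q t : R) : R :=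
  frob (qcomm q (matA q t) (matB q t)) ^+ 2 /
  (frob (matA q t) ^+ 2 * frob (matB q t) ^+ 2).

Definition tmax (R : rcfType) (q : R) : R :=
  (3 * q ^+ 4 + 2 * q ^+ 2 + 3) / (1 - q) ^+ 2.
Definition xq (R : rcfType) (q : R) : R := q * (1 - q) ^+ 2 / (2 * (1 + q ^+ 4)).
Definition hq (R : rcfType) (q : R) : R := (1 + q) ^+ 2 / (2 * (1 + q ^+ 2)).

(* Main.v *)
Require Import Defs.
From HB Require Import structures.
From mathcomp Require Import all_boot all_order all_algebra.
From mathcomp Require Import complex.
From mathcomp Require Import ring lra.
Import Order.TTheory GRing.Theory Num.Theory.
Local Open Scope ring_scope.
Local Open Scope complex_scope.

Definition nsq {R : rcfType} (x : R[i]) : R := (complex.Re x)^+2 + (complex.Im x)^+2.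

Lemma frob2 (R : rcfType) (X : 'M[R[i]]_2) :
  frob X ^+ 2 = nsq (X 0 0) + nsq (X 0 1) + nsq (X 1 0) + nsq (X 1 1).
Proof.
rewrite /frob /adjmx /mxtrace !big_ord_recr !big_ord0 /= !mxE !big_ord_recr !big_ord0 /= !mxE.
have e0 : widen_ord (leqnSn 1) ord_max = 0 :> 'I_2 by apply: val_inj.
have e1 : ord_max = 1 :> 'I_2 by apply: val_inj.
rewrite e0 e1.
case: (X 0 0) => a b; case: (X 0 1) => c d; case: (X 1 0) => e f; case: (X 1 1) => g h.
rewrite /nsq /= sqr_sqrtr; first ring.
nra.
Qed.

Lemma frobC (R : rcfType) (q t : R) : 0 <= t ->
  frob (qcomm q (matA q t) (matB q t)) ^+ 2 =
       t ^+ 2 * (1 + q ^+ 2) + 2 * t * (1 + q) * (1 + q ^+ 3)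
       + (1 - q) ^+ 2 * (1 + q ^+ 4).
Proof.
move=> t0.
rewrite frob2 /qcomm /matA /matB !mxE !big_ord_recr !big_ord0 /= !mxE /=.
rewrite /nsq /=.
move: (sqr_sqrtr t0); move: (Num.sqrt t) => s <-; ring.
Qed.

Lemma frobA (R : rcfType) (q t : R) : 0 <= t -> frob (matA q t) ^+ 2 = q ^+ 2 + t + 1.
Proof.
move=> t0; rewrite frob2 /matA !mxE /nsq /=.
move: (sqr_sqrtr t0); move: (Num.sqrt t) => s <-; ring.
Qed.

Lemma frobB (R : rcfType) (q t : R) : 0 <= t -> frob (matB q t) ^+ 2 = q ^+ 2 + t + 1.
Proof.
move=> t0; rewrite frob2 /matB !mxE /nsq /=.
move: (sqr_sqrtr t0); move: (Num.sqrt t) => s <-; ring.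
Qed.

Definition Nf {R : rcfType} (q t : R) : R := t ^+ 2 * (1 + q ^+ 2) + 2 * t * (1 + q) * (1 + q ^+ 3)
       + (1 - q) ^+ 2 * (1 + q ^+ 4).
Definition Pf {R : rcfType} (q : R) : R := 2 - q + 2 * q ^+ 2 - q ^+ 3 + 2 * q ^+ 4.
Definition Mf {R : rcfType} (q : R) : R := (1 + q ^+ 2) + q * (1 - q) ^+ 4 / (2 * Pf q).
Definition vs {R : rcfType} (q : R) : R := (1 - q) ^+ 2 / (2 * Pf q).

Lemma fratioE (R : rcfType) (q t : R) : 0 <= t -> fratio q t = Nf q t / (q ^+ 2 + t + 1) ^+ 2.
Proof. by move=> t0; rewrite /fratio frobC // frobA // frobB // -expr2. Qed.

Theorem mainTheorem4 (R : rcfType) (q : R) (hq0 : 0 < q) (hq1 : q != 1) :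
  (forall t : R, 0 <= t ->
     frob (qcomm q (matA q t) (matB q t)) ^+ 2 =
       t ^+ 2 * (1 + q ^+ 2) + 2 * t * (1 + q) * (1 + q ^+ 3)
       + (1 - q) ^+ 2 * (1 + q ^+ 4))
  /\ 0 <= tmax q
  /\ (forall t : R, 0 <= t -> fratio q t <= fratio q (tmax q))
  /\ fratio q (tmax q) = (1 - hq q * xq q) / (1 - xq q) * (1 + q ^+ 2)
  /\ fratio q (tmax q) > 1 + q ^+ 2
  /\ (exists A B : 'M[R[i]]_2,
        frob (qcomm q A B) ^+ 2 > (1 + q ^+ 2) * frob A ^+ 2 * frob B ^+ 2).
Proof.
have q1 : 1 - q != 0 by rewrite subr_eq0 eq_sym.
have q1p : 0 < (1 - q) ^+ 2 by rewrite exprn_even_gt0.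
have Pp : 0 < Pf q by rewrite /Pf; nra.
have P0 : Pf q != 0 by rewrite gt_eqF.
have tm0 : 0 <= tmax q by rewrite /tmax divr_ge0 //; [nra | exact: ltW].
have tmc : q ^+ 2 + tmax q + 1 = 2 * Pf q / (1 - q) ^+ 2.
  by rewrite /tmax /Pf; field.
have fM : fratio q (tmax q) = Mf q.
  rewrite fratioE // tmc /Nf /Mf /tmax /Pf; field.
  by apply/andP; split => //; rewrite /Pf in P0.
have Mgt : Mf q > 1 + q ^+ 2.
  rewrite /Mf ltrDl divr_gt0 //; last nra.
  by rewrite mulr_gt0 // exprn_even_gt0.
split; first exact: frobC.
split; first exact: tm0.
split.
  move=> t t0; rewrite fM fratioE //.
  have up : 0 < (q ^+ 2 + t + 1) ^+ 2 by rewrite exprn_gt0 //; nra.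
  rewrite ler_pdivrMr //.
  have key : Mf q * (q ^+ 2 + t + 1) ^+ 2 - Nf q t
      = 2 * q * Pf q * (1 - vs q * (q ^+ 2 + t + 1)) ^+ 2.
    rewrite /Mf /vs /Nf /Pf; field; by rewrite /Pf in P0.
  rewrite -subr_ge0 key; apply: mulr_ge0; last exact: sqr_ge0.
  by apply: mulr_ge0; [nra | exact: ltW].
split.
  rewrite fM /Mf /hq /xq /Pf; field.
  have e : 2 * (1 + q ^+ 4) - q * (1 - q) ^+ 2 = Pf q by rewrite /Pf; ring.
  rewrite e P0 !gt_eqF //; nra.
split; first by rewrite fM.
exists (matA q (tmax q)), (matB q (tmax q)).
have d : 0 < frob (matA q (tmax q)) ^+ 2 * frob (matB q (tmax q)) ^+ 2.
  by rewrite frobA // frobB //; apply: mulr_gt0; nra.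
rewrite -mulrA -ltr_pdivlMr // -/(fratio q (tmax q)) fM //.
Qed.
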